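(* Let $\Re_1,\Re_2$ be commutative Krasner hyperrings with identity, $\varphi_i:L(\Re_i)\to L(\Re_i)\cup\{\emptyset\}$ functions ($i=1,2$), $\Re=\Re_1\times\Re_2$, and $\phi=\varphi_1\times\varphi_2$, i.e. $\phi(N_1\times N_2)=\varphi_1(N_1)\times\varphi_2(N_2)$. Then a proper hyperideal $N$ of $\Re$ is $\phi$-prime if and only if $N$ is of one of the following types: (i) $N=N_1\times N_2$ where $N_i$ is a proper hyperideal of $\Re_i$ with $\varphi_i(N_i)=N_i$ ($i=1,2$); (ii) $N=N_1\times\Re_2$ where $N_1$ is a proper $\varphi_1$-prime hyperideal of $\Re_1$, which must be prime if $\varphi_2(\Re_2)\ne\Re_2$; (iii) $N=\Re_1\times N_2$ where $N_2$ is a proper $\varphi_2$-prime hyperideal of $\Re_2$, which must be prime if $\varphi_1(\Re_1)\ne\Re_1$.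
   Context: Krasner hyperring: $(\Re,\oplus)$ canonical hypergroup, $(\Re,\circ)$ commutative semigroup with identity $1\ne0$, $0$ absorbing, distributive. Hyperideals and $L(\Re)$ as usual. $\Re_1\times\Re_2$ has componentwise operations and every hyperideal has the form $N_1\times N_2$ with $N_i\in L(\Re_i)$; a product with $\emptyset$ is $\emptyset$. A hyperideal $N$ is $\psi$-prime if $a\circ b\in N$, $a\circ b\notin\psi(N)$ imply $a\in N$ or $b\in N$; prime if $a\circ b\in N$ implies $a\in N$ or $b\in N$. *)

(* Defs.v *)
Set Implicit Arguments.

(* Raw operations of a (Krasner) hyperring on a carrier T.
   hadd x y z  means  z \in x (+) y. *)
Record hops (T : Type) := HOps {
  hadd : T -> T -> T -> Prop;
  hzero : T;
  hneg : T -> T;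
  hmul : T -> T -> T;
  hone : T
}.
Arguments hadd {T} _ _ _ _.
Arguments hzero {T} _.
Arguments hneg {T} _ _.
Arguments hmul {T} _ _ _.
Arguments hone {T} _.

Definition is_krasner {T : Type} (o : hops T) : Prop :=
  (forall x y, exists z, hadd o x y z) /\
  (forall x y z w, (exists u, hadd o x y u /\ hadd o u z w) <->
                   (exists u, hadd o y z u /\ hadd o x u w)) /\
  (forall x y z, hadd o x y z <-> hadd o y x z) /\
  (forall x z, hadd o x (hzero o) z <-> z = x) /\
  (forall x, hadd o x (hneg o x) (hzero o)) /\
  (forall x y, hadd o x y (hzero o) -> y = hneg o x) /\
  (forall x y z, hadd o x y z -> hadd o (hneg o x) z y) /\
  (forall x y z, hmul o x (hmul o y z) = hmul o (hmul o x y) z) /\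
  (forall x y, hmul o x y = hmul o y x) /\
  (forall x, hmul o (hone o) x = x) /\
  hone o <> hzero o /\
  (forall x, hmul o (hzero o) x = hzero o) /\
  (* distributivity: a o (b (+) c) = a o b (+) a o c *)
  (forall a b c w, (exists z, hadd o b c z /\ w = hmul o a z) <->
                   hadd o (hmul o a b) (hmul o a c) w).

Record KHR := KHRing {
  kcar :> Type;
  kops : hops kcar;
  kax : is_krasner kops
}.

Definition prod_ops {T1 T2 : Type} (o1 : hops T1) (o2 : hops T2) : hops (T1 * T2) :=
  HOps (fun x y z => hadd o1 (fst x) (fst y) (fst z) /\ hadd o2 (snd x) (snd y) (snd z))
       (hzero o1, hzero o2)
       (fun x => (hneg o1 (fst x), hneg o2 (snd x)))
       (fun x y => (hmul o1 (fst x) (fst y), hmul o2 (snd x) (snd y)))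
       (hone o1, hone o2).

Definition setT {T : Type} : T -> Prop := fun _ => True.
Definition set0 {T : Type} : T -> Prop := fun _ => False.
Definition subset {T : Type} (A B : T -> Prop) : Prop := forall x, A x -> B x.
Definition setX {T1 T2 : Type} (A : T1 -> Prop) (B : T2 -> Prop) : T1 * T2 -> Prop :=
  fun p => A (fst p) /\ B (snd p).

Definition hyperideal {T : Type} (o : hops T) (N : T -> Prop) : Prop :=
  (exists x, N x) /\
  (forall a b z, N a -> N b -> hadd o a (hneg o b) z -> N z) /\
  (forall r a, N a -> N (hmul o r a)).

Definition proper {T : Type} (N : T -> Prop) : Prop := exists x, ~ N x.

Definition prime_hi {T : Type} (o : hops T) (N : T -> Prop) : Prop :=
  forall a b, N (hmul o a b) -> N a \/ N b.

Definition psi_prime {T : Type} (o : hops T) (psi : (T -> Prop) -> (T -> Prop))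
  (N : T -> Prop) : Prop :=
  forall a b, N (hmul o a b) -> ~ psi N (hmul o a b) -> N a \/ N b.

(* phi : L(R) -> L(R) \cup {empty}, with the standard convention phi(N) \subseteq N *)
Definition phi_fun {T : Type} (o : hops T) (phi : (T -> Prop) -> (T -> Prop)) : Prop :=
  forall N, hyperideal o N ->
    (hyperideal o (phi N) \/ phi N = set0) /\ subset (phi N) N.

(* phi1 x phi2 : (N1 x N2) |-> phi1(N1) x phi2(N2); the components of a
   hyperideal N of R1 x R2 are recovered as its projections. *)
Definition phiprod {T1 T2 : Type} (phi1 : (T1 -> Prop) -> (T1 -> Prop))
  (phi2 : (T2 -> Prop) -> (T2 -> Prop)) (N : T1 * T2 -> Prop) : T1 * T2 -> Prop :=
  setX (phi1 (fun a => exists b, N (a, b))) (phi2 (fun b => exists a, N (a, b))).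

(* Main.v *)
Require Import Defs.
From Stdlib Require Import Classical FunctionalExtensionality PropExtensionality.

Definition basic {T : Type} (o : hops T) : Prop :=
 (forall x y z, hadd o x y z <-> hadd o y x z) /\
 (forall x z, hadd o x (hzero o) z <-> z = x) /\
 (forall x, hneg o (hneg o x) = x) /\
 (forall x y, hmul o x y = hmul o y x) /\
 (forall x, hmul o (hone o) x = x) /\
 (forall x, hmul o (hzero o) x = hzero o).

Lemma kr_basic (R : KHR) : basic (kops R).
Proof.
  destruct (kax R) as [_ [_ [Hc [H0 [Hn [Hu [_ [_ [Mc [M1 [_ [M0 _]]]]]]]]]]]].
  repeat split; try (apply Hc); try (apply H0); auto.
  intro x. symmetry. apply Hu. apply Hc. apply Hn.
Qed.

Lemma prod_basic {T1 T2} {o1 : hops T1} {o2 : hops T2} :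
  basic o1 -> basic o2 -> basic (prod_ops o1 o2).
Proof.
  intros [c1 [a1 [n1 [m1 [u1 z1]]]]] [c2 [a2 [n2 [m2 [u2 z2]]]]].
  split; [|split; [|split; [|split; [|split]]]].
  - intros [x1 x2] [y1 y2] [z1' z2']; simpl.
    rewrite (c1 x1 y1 z1'), (c2 x2 y2 z2'). tauto.
  - intros [x1 x2] [z1' z2']; simpl. rewrite a1, a2. split.
    + intros [-> ->]; reflexivity.
    + intro H; inversion H; auto.
  - intros [x y]; simpl; rewrite n1, n2; reflexivity.
  - intros [x y] [x' y']; simpl; rewrite m1, m2; reflexivity.
  - intros [x y]; simpl; rewrite u1, u2; reflexivity.
  - intros [x y]; simpl; rewrite z1, z2; reflexivity.
Qed.

Section Ideal.
Context {T : Type} {o : hops T} (B : basic o) {N : T -> Prop} (HI : hyperideal o N).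

Lemma I0 : N (hzero o).
Proof.
  destruct B as [_ [_ [_ [_ [_ z]]]]]. destruct HI as [[x Hx] [_ Hm]].
  rewrite <- (z x). apply Hm; auto.
Qed.

Lemma Imul a r : N a -> N (hmul o a r).
Proof.
  destruct B as [_ [_ [_ [mc _]]]]. destruct HI as [_ [_ Hm]].
  intro. rewrite mc. auto.
Qed.

Lemma Ineg a : N a -> N (hneg o a).
Proof.
  destruct B as [c [a0 _]]. destruct HI as [_ [Hc _]].
  intro Ha. apply (Hc (hzero o) a). apply I0. auto. apply c, a0. reflexivity.
Qed.

Lemma Iadd a b z : N a -> N b -> hadd o a b z -> N z.
Proof.
  destruct B as [_ [_ [nn _]]]. destruct HI as [_ [Hc _]].
  intros Ha Hb Hz. apply (Hc a (hneg o b)); auto. apply Ineg; auto. rewrite nn; auto.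
Qed.

Lemma Ifull : N (hone o) -> forall x, N x.
Proof.
  destruct B as [_ [_ [_ [mc [m1 _]]]]]. intros H x.
  rewrite <- (m1 x). apply Imul; auto.
Qed.
End Ideal.

Section Prod.
Context {T1 T2 : Type} {o1 : hops T1} {o2 : hops T2} (B1 : basic o1) (B2 : basic o2)
  {N : T1 * T2 -> Prop} (HI : hyperideal (prod_ops o1 o2) N).

Lemma decomp a b : N (a, b) <-> (exists b', N (a, b')) /\ (exists a', N (a', b)).
Proof.
  pose proof (prod_basic B1 B2) as BP.
  destruct B1 as [c1 [a1 [_ [m1 [u1 z1]]]]]. destruct B2 as [c2 [a2 [_ [m2 [u2 z2]]]]].
  split. { intro H; split; eauto. }
  intros [[b' Hb'] [a' Ha']].
  assert (HA : N (a, hzero o2)).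
  { pose proof (Imul BP HI (a, b') (hone o1, hzero o2) Hb') as H. simpl in H.
    rewrite m1, u1, m2, z2 in H. exact H. }
  assert (HB : N (hzero o1, b)).
  { pose proof (Imul BP HI (a', b) (hzero o1, hone o2) Ha') as H. simpl in H.
    rewrite m1, z1, m2, u2 in H. exact H. }
  apply (Iadd BP HI _ _ (a, b) HA HB). simpl. split. apply a1; reflexivity. apply c2, a2; reflexivity.
Qed.

Lemma proj1_ideal : hyperideal o1 (fun a => exists b, N (a, b)).
Proof.
  pose proof (prod_basic B1 B2) as BP.
  pose proof (I0 BP HI) as H0. pose proof decomp as D.
  destruct B1 as [c1 [a1 [_ [m1 [u1 z1]]]]]. destruct B2 as [c2 [a2 [_ [m2 [u2 z2]]]]].
  destruct HI as [_ [Hc Hm]].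
  split; [|split].
  - exists (hzero o1). exists (hzero o2). exact H0.
  - intros a b z Ha Hb Hz.
    assert (Ha0 : N (a, hzero o2)) by (apply D; split; [exact Ha| exists (hzero o1); exact H0]).
    assert (Hb0 : N (b, hzero o2)) by (apply D; split; [exact Hb| exists (hzero o1); exact H0]).
    exists (hneg o2 (hzero o2)). apply (Hc _ _ _ Ha0 Hb0). simpl. split; auto.
    apply c2, a2. reflexivity.
  - intros r a [b Hb]. exists (hmul o2 (hone o2) b). apply (Hm (r, hone o2) (a, b)). auto.
Qed.

Lemma proj2_ideal : hyperideal o2 (fun b => exists a, N (a, b)).
Proof.
  pose proof (prod_basic B1 B2) as BP.
  pose proof (I0 BP HI) as H0. pose proof decomp as D.
  destruct B1 as [c1 [a1 [_ [m1 [u1 z1]]]]]. destruct B2 as [c2 [a2 [_ [m2 [u2 z2]]]]].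
  destruct HI as [_ [Hc Hm]].
  split; [|split].
  - exists (hzero o2). exists (hzero o1). exact H0.
  - intros a b z Ha Hb Hz.
    assert (Ha0 : N (hzero o1, a)) by (apply D; split; [exists (hzero o2); exact H0|exact Ha]).
    assert (Hb0 : N (hzero o1, b)) by (apply D; split; [exists (hzero o2); exact H0|exact Hb]).
    exists (hneg o1 (hzero o1)). apply (Hc _ _ _ Ha0 Hb0). simpl. split; auto.
    apply c1, a1. reflexivity.
  - intros r a [b Hb]. exists (hmul o1 (hone o1) b). apply (Hm (hone o1, r) (b, a)). auto.
Qed.
End Prod.

Lemma pred_ext {T} (A B : T -> Prop) : (forall x, A x <-> B x) -> A = B.
Proof. intro H. apply functional_extensionality; intro x. apply propositional_extensionality; auto. Qed.

Lemma notproper_full {T} (A : T -> Prop) : ~ proper A -> A = setT.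
Proof.
  intro H. apply pred_ext. intro x. unfold setT. split; auto. intros _.
  apply NNPP. intro Hx. apply H. exists x; auto.
Qed.

Lemma neq_setT {T} (A : T -> Prop) : A <> setT -> exists c, ~ A c.
Proof.
  intro H. apply NNPP. intro H'. apply H. apply pred_ext. intro x; unfold setT; split; auto.
  intros _. apply NNPP. intro Hx. apply H'. eauto.
Qed.

Theorem mainTheorem11 (R1 R2 : KHR)
  (phi1 : (R1 -> Prop) -> (R1 -> Prop)) (phi2 : (R2 -> Prop) -> (R2 -> Prop))
  (Hphi1 : phi_fun (kops R1) phi1) (Hphi2 : phi_fun (kops R2) phi2)
  (N : R1 * R2 -> Prop)
  (HN : hyperideal (prod_ops (kops R1) (kops R2)) N) (HNp : proper N) :
  psi_prime (prod_ops (kops R1) (kops R2)) (phiprod phi1 phi2) N <->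
  ( (exists (N1 : R1 -> Prop) (N2 : R2 -> Prop),
        hyperideal (kops R1) N1 /\ proper N1 /\
        hyperideal (kops R2) N2 /\ proper N2 /\
        phi1 N1 = N1 /\ phi2 N2 = N2 /\ N = setX N1 N2)
    \/ (exists N1 : R1 -> Prop,
        hyperideal (kops R1) N1 /\ proper N1 /\ psi_prime (kops R1) phi1 N1 /\
        (phi2 setT <> setT -> prime_hi (kops R1) N1) /\ N = setX N1 setT)
    \/ (exists N2 : R2 -> Prop,
        hyperideal (kops R2) N2 /\ proper N2 /\ psi_prime (kops R2) phi2 N2 /\
        (phi1 setT <> setT -> prime_hi (kops R2) N2) /\ N = setX setT N2) ).
Proof.
  pose proof (kr_basic R1) as B1. pose proof (kr_basic R2) as B2.
  set (o1 := kops R1) in *. set (o2 := kops R2) in *.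
  set (P1 := fun a => exists b, N (a, b)).
  set (P2 := fun b => exists a, N (a, b)).
  assert (HP1 : hyperideal o1 P1) by (apply (proj1_ideal B1 B2 HN)).
  assert (HP2 : hyperideal o2 P2) by (apply (proj2_ideal B1 B2 HN)).
  assert (HNeq : N = setX P1 P2).
  { apply pred_ext. intros [a b]. unfold setX; simpl. apply (decomp B1 B2 HN). }
  assert (Hphi : phiprod phi1 phi2 N = setX (phi1 P1) (phi2 P2)) by reflexivity.
  destruct B1 as [c1 [a1 [nn1 [m1 [u1 z1]]]]]. destruct B2 as [c2 [a2 [nn2 [m2 [u2 z2]]]]].
  assert (r1 : forall x, hmul o1 x (hone o1) = x) by (intro; rewrite m1; auto).
  assert (r2 : forall x, hmul o2 x (hone o2) = x) by (intro; rewrite m2; auto).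
  assert (q1 : forall x, hmul o1 x (hzero o1) = hzero o1) by (intro; rewrite m1; auto).
  assert (q2 : forall x, hmul o2 x (hzero o2) = hzero o2) by (intro; rewrite m2; auto).
  pose proof (I0 (kr_basic R1) HP1) as P10.
  pose proof (I0 (kr_basic R2) HP2) as P20.
  split.
  - intro H. unfold psi_prime in H. rewrite Hphi in H.
    destruct (classic (proper P1)) as [Pp1|Pp1]; destruct (classic (proper P2)) as [Pp2|Pp2].
    + left. exists P1, P2. refine (conj HP1 (conj Pp1 (conj HP2 (conj Pp2 (conj _ (conj _ HNeq)))))).
      * apply pred_ext. intro x. split. apply (proj2 (Hphi1 P1 HP1)).
        intro Hx. apply NNPP. intro Hn.
        destruct (H (x, hone o2) (hone o1, hzero o2)) as [Hc|Hc]; simpl.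
        -- rewrite HNeq. unfold setX; simpl. rewrite r1, q2. auto.
        -- unfold setX; simpl. rewrite r1. tauto.
        -- destruct Pp2 as [y Hy]. apply Hy. apply (Ifull (kr_basic R2) HP2). exists x; auto.
        -- destruct Pp1 as [y Hy]. apply Hy. apply (Ifull (kr_basic R1) HP1). exists (hzero o2); auto.
      * apply pred_ext. intro x. split. apply (proj2 (Hphi2 P2 HP2)).
        intro Hx. apply NNPP. intro Hn.
        destruct (H (hone o1, x) (hzero o1, hone o2)) as [Hc|Hc]; simpl.
        -- rewrite HNeq. unfold setX; simpl. rewrite r2, q1. auto.
        -- unfold setX; simpl. rewrite r2. tauto.
        -- destruct Pp1 as [y Hy]. apply Hy. apply (Ifull (kr_basic R1) HP1). exists x; auto.
        -- destruct Pp2 as [y Hy]. apply Hy. apply (Ifull (kr_basic R2) HP2). exists (hzero o1); auto.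
    + apply notproper_full in Pp2. right; left. exists P1. refine (conj HP1 (conj Pp1 (conj _ (conj _ _)))).
      * intros a b Hab Hn.
        destruct (H (a, hone o2) (b, hone o2)) as [Hc|Hc]; simpl.
        -- rewrite HNeq, Pp2. unfold setX, setT; simpl. auto.
        -- unfold setX; simpl. tauto.
        -- left. exists (hone o2). auto.
        -- right. exists (hone o2). auto.
      * intros Hne a b Hab. destruct (neq_setT _ Hne) as [c Hcn].
        destruct (H (a, c) (b, hone o2)) as [Hc|Hc]; simpl.
        -- rewrite HNeq, Pp2. unfold setX, setT; simpl. auto.
        -- unfold setX; simpl. rewrite Pp2, r2. tauto.
        -- left. exists c. auto.
        -- right. exists (hone o2). auto.
      * rewrite HNeq, Pp2. reflexivity.
    + apply notproper_full in Pp1. right; right. exists P2. refine (conj HP2 (conj Pp2 (conj _ (conj _ _)))).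
      * intros a b Hab Hn.
        destruct (H (hone o1, a) (hone o1, b)) as [Hc|Hc]; simpl.
        -- rewrite HNeq, Pp1. unfold setX, setT; simpl. auto.
        -- unfold setX; simpl. tauto.
        -- left. exists (hone o1). auto.
        -- right. exists (hone o1). auto.
      * intros Hne a b Hab. destruct (neq_setT _ Hne) as [c Hcn].
        destruct (H (c, a) (hone o1, b)) as [Hc|Hc]; simpl.
        -- rewrite HNeq, Pp1. unfold setX, setT; simpl. auto.
        -- unfold setX; simpl. rewrite Pp1, r1. tauto.
        -- left. exists c. auto.
        -- right. exists (hone o1). auto.
      * rewrite HNeq, Pp1. reflexivity.
    + apply notproper_full in Pp1. apply notproper_full in Pp2.
      destruct HNp as [[x y] Hxy]. exfalso; apply Hxy. rewrite HNeq, Pp1, Pp2. unfold setX, setT; auto.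
  - intros [[N1 [N2 [H1 [Pr1 [H2 [Pr2 [F1 [F2 E]]]]]]]] | [[N1 [H1 [Pr1 [Ps1 [Pm1 E]]]]] | [N2 [H2 [Pr2 [Ps2 [Pm2 E]]]]]]].
    + assert (E1 : P1 = N1).
      { apply pred_ext; intro x. unfold P1. rewrite E. unfold setX; simpl. split.
        intros [b [h _]]; auto. intro h. exists (hzero o2). split; auto. apply (I0 (kr_basic R2) H2). }
      assert (E2 : P2 = N2).
      { apply pred_ext; intro x. unfold P2. rewrite E. unfold setX; simpl. split.
        intros [b [_ h]]; auto. intro h. exists (hzero o1). split; auto. apply (I0 (kr_basic R1) H1). }
      unfold psi_prime. rewrite Hphi, E1, E2, F1, F2. rewrite <- E. intros a b Ha Hn. contradiction.
    + assert (E1 : P1 = N1).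
      { apply pred_ext; intro x. unfold P1. rewrite E. unfold setX, setT; simpl. split.
        intros [b [h _]]; auto. intro h. exists (hzero o2). split; auto. }
      assert (E2 : P2 = setT).
      { apply pred_ext; intro x. unfold P2. rewrite E. unfold setX, setT; simpl. split.
        auto. intros _. exists (hzero o1). split; auto. apply (I0 (kr_basic R1) H1). }
      unfold psi_prime. rewrite Hphi, E1, E2. rewrite E. unfold setX, setT; simpl.
      intros [x1 x2] [y1 y2] [Hin _] Hn; simpl in *.
      destruct (classic (phi1 N1 (hmul o1 x1 y1))) as [Hp|Hp].
      * assert (Hne : phi2 setT <> setT).
        { intro Heq. apply Hn. split; auto. unfold setT in Heq. rewrite Heq. exact I. }
        destruct (Pm1 Hne x1 y1 Hin); auto.
      * destruct (Ps1 x1 y1 Hin Hp); auto.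
    + assert (E2 : P2 = N2).
      { apply pred_ext; intro x. unfold P2. rewrite E. unfold setX, setT; simpl. split.
        intros [b [_ h]]; auto. intro h. exists (hzero o1). split; auto. }
      assert (E1 : P1 = setT).
      { apply pred_ext; intro x. unfold P1. rewrite E. unfold setX, setT; simpl. split.
        auto. intros _. exists (hzero o2). split; auto. apply (I0 (kr_basic R2) H2). }
      unfold psi_prime. rewrite Hphi, E1, E2. rewrite E. unfold setX, setT; simpl.
      intros [x1 x2] [y1 y2] [_ Hin] Hn; simpl in *.
      destruct (classic (phi2 N2 (hmul o2 x2 y2))) as [Hp|Hp].
      * assert (Hne : phi1 setT <> setT).
        { intro Heq. apply Hn. split; auto. unfold setT in Heq. rewrite Heq. exact I. }
        destruct (Pm2 Hne x2 y2 Hin); auto.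
      * destruct (Ps2 x2 y2 Hin Hp); auto.
Qed.
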